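(* Let $(S,d)$ be a finite metric space partitioned into two disjoint groups $S=S_1\cup S_2$, let $k_1,k_2$ be nonnegative integers with $k=k_1+k_2$, and let $r^*$ be the optimal radius of the fair $k$-center problem. Suppose the points arrive in a stream in which all points of $S_1$ arrive before all points of $S_2$, and let $\Gamma_1',\Gamma_2',\Gamma_{sub}$ be the sets produced by Algorithm B (described in the context) with $\lambda=2r^*$. Then: (1) $|\Gamma_1'|+|\Gamma_2'|\le k$; (2) $|\Gamma_2'|\le k_2$; (3) there exists a subset $\Gamma_1''\subseteq\Gamma_1'$ such that every $c\in\Gamma_1''$ has a replacement $\sigma(c)\in\Gamma_{sub}$ (so $d(c,\sigma(c))\le r^*$), and, with $\Gamma'_{sub}=\{\sigma(c): c\in\Gamma_1''\}\subseteq\Gamma_{sub}$, we have $|((\Gamma_1'\setminus\Gamma_1'')\cup\Gamma'_{sub})\cap S_1|\le k_1$.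
   Context: Fair $k$-center: $C\subseteq S$ is feasible if $|C\cap S_l|\le k_l$ for $l=1,2$; cost $\max_{s\in S}d(s,C)$, $d(s,C)=\min_{c\in C}d(s,c)$, $d(s,\emptyset)=\infty$; $r^*$ is the minimum cost over feasible $C$. Algorithm B (parameter $\lambda=2r^*$): initialize $\Gamma_1'=\Gamma_2'=\Gamma_{sub}=\emptyset$. Upon each arriving $i\in S_1$: if $d(i,\Gamma_1')>\lambda$, add $i$ to $\Gamma_1'$. Upon each arriving $i\in S_2$: if $|\Gamma_1'|\le k_1$, then add $i$ to $\Gamma_2'$ iff $d(i,\Gamma_1')>3\lambda/2$ and $d(i,\Gamma_2')>\lambda$; otherwise ($|\Gamma_1'|>k_1$), add $i$ to $\Gamma_2'$ iff $d(i,\Gamma_1'\cup\Gamma_2')>\lambda$, and, in addition, if there is a point $j\in\Gamma_1'$ that has no replacement yet and satisfies $d(i,j)\le\lambda/2$, add $i$ to $\Gamma_{sub}$ and designate $i$ as the replacement $\sigma(j)$ of such a $j$. Output $\Gamma_1',\Gamma_2',\Gamma_{sub}$. *)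

(* Defs.v *)
From HB Require Import structures.
From mathcomp Require Import all_boot all_order all_algebra.
Set Implicit Arguments. Unset Strict Implicit. Unset Printing Implicit Defensive.
Import Order.TTheory GRing.Theory Num.Theory.
Local Open Scope ring_scope.

Section FairKCenter.
Variables (R : realFieldType) (T : finType) (d : T -> T -> R).

Definition is_metric : Prop :=
  [/\ forall x y, 0 <= d x y,
      forall x y, d x y = 0 <-> x = y,
      forall x y, d x y = d y x &
      forall x y z, d x z <= d x y + d y z].

Definition feasible (S1 S2 : {set T}) (k1 k2 : nat) (C : {set T}) : Prop :=
  (#|C :&: S1| <= k1)%N /\ (#|C :&: S2| <= k2)%N.

(* cost(C) <= r, i.e. max_s d(s,C) <= r, with d(s, emptyset) = +oo *)
Definition covers (C : {set T}) (r : R) : Prop :=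
  forall s : T, exists2 c, c \in C & d s c <= r.

Definition opt_radius (S1 S2 : {set T}) (k1 k2 : nat) (r : R) : Prop :=
  (exists2 C, feasible S1 S2 k1 k2 C & covers C r) /\
  (forall C r', feasible S1 S2 k1 k2 C -> covers C r' -> r <= r').

(* d(i, G) > lam, with d(i, emptyset) = +oo *)
Definition far (i : T) (G : {set T}) (lam : R) : Prop :=
  forall c, c \in G -> lam < d i c.

(* State of Algorithm B: Gamma_1', Gamma_2', and the list of replacement
   pairs (j, sigma(j)); Gamma_sub is the set of second components. *)
Record stateB := StateB {
  G1 : {set T};
  G2 : {set T};
  repl : seq (T * T)
}.

Definition Gsub (st : stateB) : {set T} := [set x in map snd (repl st)].

Definition has_repl (st : stateB) (j : T) : bool := j \in map fst (repl st).

(* One step of Algorithm B on arriving point i (nondeterministic in the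
   choice of the point j to be replaced). *)
Inductive stepB (S1 S2 : {set T}) (k1 : nat) (lam : R) :
    stateB -> T -> stateB -> Prop :=
| stepB_S1_add st i :
    i \in S1 -> far i (G1 st) lam ->
    stepB S1 S2 k1 lam st i (StateB (i |: G1 st) (G2 st) (repl st))
| stepB_S1_skip st i :
    i \in S1 -> ~ far i (G1 st) lam ->
    stepB S1 S2 k1 lam st i st
| stepB_S2_small_add st i :
    i \in S2 -> (#|G1 st| <= k1)%N ->
    far i (G1 st) (3 * lam / 2) -> far i (G2 st) lam ->
    stepB S1 S2 k1 lam st i (StateB (G1 st) (i |: G2 st) (repl st))
| stepB_S2_small_skip st i :
    i \in S2 -> (#|G1 st| <= k1)%N ->
    ~ (far i (G1 st) (3 * lam / 2) /\ far i (G2 st) lam) ->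
    stepB S1 S2 k1 lam st i st
| stepB_S2_large st i G2' rp' :
    i \in S2 -> (k1 < #|G1 st|)%N ->
    (far i (G1 st :|: G2 st) lam -> G2' = i |: G2 st) ->
    (~ far i (G1 st :|: G2 st) lam -> G2' = G2 st) ->
    ((exists j, [/\ j \in G1 st, ~~ has_repl st j, d i j <= lam / 2 &
                   rp' = rcons (repl st) (j, i)]) \/
     ((forall j, j \in G1 st -> ~~ has_repl st j -> lam / 2 < d i j) /\
      rp' = repl st)) ->
    stepB S1 S2 k1 lam st i (StateB (G1 st) G2' rp').

Inductive runB (S1 S2 : {set T}) (k1 : nat) (lam : R) :
    stateB -> seq T -> stateB -> Prop :=
| runB_nil st : runB S1 S2 k1 lam st [::] st
| runB_cons st i s st1 st2 :
    stepB S1 S2 k1 lam st i st1 -> runB S1 S2 k1 lam st1 s st2 ->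
    runB S1 S2 k1 lam st (i :: s) st2.

Definition initB : stateB := StateB set0 set0 [::].

End FairKCenter.

(* Main.v *)
Require Import Defs.
From HB Require Import structures.
From mathcomp Require Import all_boot all_order all_algebra.
From mathcomp Require Import lra zify.
From Stdlib Require Import Classical.
Import Order.TTheory GRing.Theory Num.Theory.
Local Open Scope ring_scope.
Set Implicit Arguments. Unset Strict Implicit.

Definition pfar (R : realFieldType) (T : finType) (d : T -> T -> R) (lam : R) (A : {set T}) :=
  forall x y, x \in A -> y \in A -> x != y -> lam < d x y.

Arguments pfar {R T}.

Lemma notfarP (R : realFieldType) (T : finType) (d : T -> T -> R) i G lam :
  ~ far d i G lam -> exists2 c, c \in G & d i c <= lam.
Proof.
move=> H; case: (boolP [exists c in G, d i c <= lam]) => [/exists_inP[c cG h]|/exists_inPn h].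
  by exists c.
exfalso; apply: H => c cG; have := h c cG; by rewrite -ltNge.
Qed.

Lemma run_cat (R : realFieldType) (T : finType) (d : T -> T -> R) (S1 S2 : {set T}) (k1 : nat) (lam : R) (st : stateB T) (s1 s2 : seq T) fin :
  runB d S1 S2 k1 lam st (s1 ++ s2) fin ->
  exists mid, runB d S1 S2 k1 lam st s1 mid /\ runB d S1 S2 k1 lam mid s2 fin.
Proof.
elim: s1 st => [|i s1 IH] st /=.
  by move=> H; exists st; split => //; constructor.
move=> H; inversion H as [|? ? ? ? st1 Hs Hr]; subst.
have [mid [h1 h2]] := IH _ Hr.
by exists mid; split => //; econstructor; eauto.
Qed.

Lemma phase1 (R : realFieldType) (T : finType) (d : T -> T -> R) (S1 S2 : {set T}) (k1 : nat) (lam : R) (st : stateB T) (s : seq T) fin :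
  (forall x y, d x y = d y x) -> (forall x, d x x = 0) -> 0 <= lam ->
  [disjoint S1 & S2] ->
  runB d S1 S2 k1 lam st s fin -> all (fun x => x \in S1) s ->
  [/\ G2 fin = G2 st, repl fin = repl st, G1 st \subset G1 fin,
      (pfar d lam (G1 st) -> pfar d lam (G1 fin)) &
      (forall x, x \in s -> exists2 j, j \in G1 fin & d x j <= lam)].
Proof.
move=> dsym d0 lam0 Hdis.
elim => [st0 | st0 i s0 st1 st2 Hstep Hrun IH] //=.
case/andP => iS1 /IH [e2 er sub pf cov].
have iS2 : (i \in S2) = false by apply: (disjointFr Hdis).
inversion Hstep; subst; rewrite ?iS2 // in H.
- split => //.
  + by apply: subset_trans sub; apply: subsetUr.
  + move=> p; apply: pf => x y; rewrite !in_setU1.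
    case/orP => [/eqP->|xG]; case/orP => [/eqP->|yG] //; first by rewrite eqxx.
    * by move=> _; apply: H0.
    * by move=> _; rewrite dsym; apply: H0.
    * by apply: p.
  + move=> x; rewrite in_cons; case/orP => [/eqP->|xs]; last exact: cov.
    exists i; first by apply: (subsetP sub); rewrite in_setU1 eqxx.
    by rewrite d0.
- split => // x; rewrite in_cons; case/orP => [/eqP->|xs]; last exact: cov.
  have [c cG h] := notfarP H0.
  by exists c => //; apply: (subsetP sub).
Qed.

Definition Inv2 (R : realFieldType) (T : finType) (d : T -> T -> R) (S2 : {set T}) (k1 : nat) (lam : R)
  (G : {set T}) (st : stateB T) :=
  [/\ G1 st = G,
      (forall p, p \in repl st -> [/\ p.1 \in G, d p.2 p.1 <= lam / 2 & p.2 \in S2]),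
      pfar d lam (G2 st),
      ((#|G| <= k1)%N -> forall x y, x \in G2 st -> y \in G -> 3 * lam / 2 < d x y) &
      ((k1 < #|G|)%N -> forall x y, x \in G2 st -> y \in G -> lam < d x y)].

Lemma step2 (R : realFieldType) (T : finType) (d : T -> T -> R) (S1 S2 : {set T}) (k1 : nat) (lam : R)
   G st i st1 :
  (forall x y, d x y = d y x) -> (forall x y z, d x z <= d x y + d y z) -> 0 <= lam ->
  [disjoint S1 & S2] ->
  Inv2 d S2 k1 lam G st -> stepB d S1 S2 k1 lam st i st1 -> i \in S2 ->
  [/\ Inv2 d S2 k1 lam G st1,
      (forall p, p \in repl st -> p \in repl st1) &
      ((k1 < #|G|)%N -> pfar d lam G -> forall j, j \in G -> d i j <= lam / 2 -> has_repl st1 j)].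
Proof.
move=> dsym dtri lam0 Hdis [eG rok pf sm lg] Hstep iS2.
have iS1 : (i \in S1) = false by apply: (disjointFl Hdis).
inversion Hstep; subst; rewrite ?iS1 // in H.
- split => //.
  + split => //.
    * move=> x y; rewrite !in_setU1.
      case/orP => [/eqP->|xG]; case/orP => [/eqP->|yG] //; first by rewrite eqxx.
      - by move=> _; apply: H2.
      - by move=> _; rewrite dsym; apply: H2.
      - by apply: pf.
    * move=> _ x y; rewrite in_setU1; case/orP => [/eqP->|xG] yG; first exact: H1.
      exact: sm.
    * by move=> h; exfalso; lia.
  + by move=> h; exfalso; lia.
- split => //.
  by move=> h; exfalso; lia.
- have rok' : forall p, p \in rp' -> [/\ p.1 \in G1 st, d p.2 p.1 <= lam / 2 & p.2 \in S2].
    case: H3 => [[j [jG _ dj ->]]|[_ ->]] //.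
    move=> p; rewrite mem_rcons in_cons; case/orP => [/eqP->|]; last exact: rok.
    by split.
  split.
  + split => //.
    * case: (classic (far d i (G1 st :|: G2 st) lam)) => hf.
        rewrite (H1 hf) => x y; rewrite !in_setU1.
        case/orP => [/eqP->|xG]; case/orP => [/eqP->|yG] //; first by rewrite eqxx.
        - by move=> _; apply: hf; rewrite in_setU yG orbT.
        - by move=> _; rewrite dsym; apply: hf; rewrite in_setU xG orbT.
        - by apply: pf.
      by rewrite (H2 hf).
    * by move=> h; exfalso; lia.
    * move=> _ x y.
      case: (classic (far d i (G1 st :|: G2 st) lam)) => hf; last first.
        by rewrite (H2 hf); apply: lg.
      rewrite (H1 hf) in_setU1; case/orP => [/eqP->|xG] yG; last exact: lg.
      by apply: hf; rewrite in_setU yG.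
  + by case: H3 => [[j [jG _ dj ->]]|[_ ->]] // p pr; rewrite mem_rcons in_cons pr orbT.
  + move=> _ pG j jG dj.
    case: H3 => [[j' [j'G nr dj' ->]]|[hh ->]]; last first.
      case hr: (has_repl st j) => //.
      by have := hh j jG; rewrite hr => /(_ isT); rewrite ltNge dj.
    case hr: (has_repl st j).
      move: hr; rewrite /has_repl /= => /mapP[p pr ->].
      by apply/mapP; exists p => //; rewrite mem_rcons in_cons pr orbT.
    have -> : j = j'.
      apply/eqP; apply: contraT => ne.
      have := pG _ _ jG j'G ne.
      have := dtri j i j'; rewrite (dsym j i).
      lra.
    by rewrite /has_repl /=; apply/mapP; exists (j', i) => //; rewrite mem_rcons mem_head.
Qed.

Lemma phase2 (R : realFieldType) (T : finType) (d : T -> T -> R) (S1 S2 : {set T}) (k1 : nat) (lam : R)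
   G st (s : seq T) fin :
  (forall x y, d x y = d y x) -> (forall x y z, d x z <= d x y + d y z) -> 0 <= lam ->
  [disjoint S1 & S2] ->
  runB d S1 S2 k1 lam st s fin -> Inv2 d S2 k1 lam G st -> all (fun x => x \in S2) s ->
  [/\ Inv2 d S2 k1 lam G fin,
      (forall p, p \in repl st -> p \in repl fin) &
      ((k1 < #|G|)%N -> pfar d lam G -> forall x, x \in s -> forall j, j \in G -> d x j <= lam / 2 -> has_repl fin j)].
Proof.
move=> dsym dtri lam0 Hdis.
elim => [st0 | st0 i s0 st1 st2 Hstep Hrun IH] //=.
move=> inv /andP[iS2 allS].
have [inv1 mon1 cov1] := step2 dsym dtri lam0 Hdis inv Hstep iS2.
have [inv2 mon2 cov2] := IH inv1 allS.
split => //.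
  by move=> p /mon1 /mon2.
move=> lt pG x; rewrite in_cons; case/orP => [/eqP->|xs]; last exact: cov2.
move=> j jG dj; have := cov1 lt pG j jG dj.
by rewrite /has_repl => /mapP[p /mon2 pr ->]; apply/mapP; exists p.
Qed.

Lemma pfar_sub (R : realFieldType) (T : finType) (d : T -> T -> R) lam (A B : {set T}) :
  A \subset B -> pfar d lam B -> pfar d lam A.
Proof. by move=> /subsetP sAB pB x y xA yA; apply: pB; apply: sAB. Qed.

Lemma ar3 (R : realFieldType) (r a b c : R) : 2 * r < a -> b <= r -> c <= r -> a <= b + c -> False.
Proof. move=> *; lra. Qed.

Lemma count_far (R : realFieldType) (T : finType) (d : T -> T -> R) (C : {set T}) (r : R)
    (A B : {set T}) :
  (forall x y, d x y = d y x) -> (forall x y z, d x z <= d x y + d y z) ->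
  covers d C r -> pfar d (2 * r) A ->
  (forall x, x \in A -> forall c, c \in C -> d x c <= r -> c \in B) -> (#|A| <= #|B|)%N.
Proof.
move=> dsym dtri cov pA hB.
pose f x := odflt x [pick c in C | d x c <= r].
have hf : forall x, f x \in C /\ d x (f x) <= r.
  move=> x; rewrite /f; case: pickP => [c /andP[]|h] //=.
  by have [c cC dc] := cov x; have := h c; rewrite cC dc.
have inj : {in A &, injective f}.
  move=> x y xA yA e; apply/eqP; apply: contraT => ne.
  have h := pA _ _ xA yA ne; have t := dtri x (f x) y.
  have [_ h1] := hf x; have [_ h2] := hf y; rewrite e in h1 t.
  rewrite (dsym (f y) y) in t; exfalso; exact: (ar3 h h1 h2 t).
rewrite -(card_in_imset inj); apply: subset_leq_card; apply/subsetP => c /imsetP[x xA ->].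
by have [h1 h2] := hf x; exact: (hB x xA _ h1 h2).
Qed.

Lemma sigmaP (T : eqType) (r : seq (T * T)) c :
  c \in map fst r -> (c, (nth (c, c) r (index c (map fst r))).2) \in r.
Proof.
move=> cr.
have lt : (index c (map fst r) < size r)%N by rewrite -(size_map fst) index_mem.
have e : (nth (c, c) r (index c (map fst r))).1 = c.
  by rewrite -(nth_map (c, c) c fst lt) nth_index.
by rewrite -{1}e -surjective_pairing mem_nth.
Qed.

Set Implicit Arguments. Unset Strict Implicit.
Lemma arA (R : realFieldType) (r a : R) : 0 <= r -> 3 * (2 * r) / 2 < a -> 2 * r < a.
Proof. move=> *; lra. Qed.
Lemma arB (R : realFieldType) (r a b c : R) : a <= r -> b <= 2 * r -> c <= a + b -> 3 * (2 * r) / 2 < c -> False.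
Proof. move=> *; lra. Qed.
Lemma arC (R : realFieldType) (r a : R) : a <= 2 * r / 2 -> a <= r.
Proof. move=> *; lra. Qed.
Lemma arD (R : realFieldType) (r a : R) : a <= r -> a <= 2 * r / 2.
Proof. move=> *; lra. Qed.

Unset Implicit Arguments. Set Strict Implicit.

Theorem lemma5 (R : realFieldType) (T : finType) (d : T -> T -> R)
    (S1 S2 : {set T}) (k1 k2 : nat) (rstar : R)
    (s s1 s2 : seq T) (fin : stateB T) :
  is_metric d ->
  [disjoint S1 & S2] -> S1 :|: S2 = [set: T] ->
  opt_radius d S1 S2 k1 k2 rstar ->
  (* the stream: every point exactly once, all of S1 before all of S2 *)
  uniq s -> (forall x, x \in s) ->
  s = s1 ++ s2 -> all (fun x => x \in S1) s1 -> all (fun x => x \in S2) s2 ->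
  runB d S1 S2 k1 (2 * rstar) (initB T) s fin ->
  [/\ (#|G1 fin| + #|G2 fin| <= k1 + k2)%N,
      (#|G2 fin| <= k2)%N &
      exists (G1'' : {set T}) (sigma : T -> T),
        [/\ G1'' \subset G1 fin,
            forall c, c \in G1'' ->
              (c, sigma c) \in repl fin /\ d c (sigma c) <= rstar &
            (#|((G1 fin :\: G1'') :|: [set sigma c | c in G1'']) :&: S1|
               <= k1)%N]].
Proof.
move=> [d_ge0 d_eq dsym dtri] Hdis HU [[C [CS1 CS2] Ccov] Copt] _ Hall Hs Hs1 Hs2 Hrun.
have d0 : forall x, d x x = 0 by move=> x; apply/d_eq.
have r0 : 0 <= rstar.
  case: (pickP (@predT T)) => [x _ | H].
    by have [c _ h] := Ccov x; exact: le_trans (d_ge0 x c) h.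
  have := Copt set0 (rstar - 1).
  have feas : feasible S1 S2 k1 k2 set0 by split; rewrite set0I cards0.
  move=> /(_ feas) h.
  have : covers d set0 (rstar - 1) by move=> x; have := H x.
  move=> /h; lra.
have lam0 : 0 <= 2 * rstar by lra.
rewrite Hs in Hrun; have [mid [R1 R2]] := run_cat Hrun.
have [e2 er _ pf1 cov1] := phase1 dsym d0 lam0 Hdis R1 Hs1.
have pG : pfar d (2 * rstar) (G1 mid) by apply: pf1 => x y; rewrite inE.
set G := G1 mid in pG cov1.
have hinv0 : Inv2 d S2 k1 (2 * rstar) G mid.
  split => //; rewrite ?er ?e2 //=; [move=> x y|move=> _ x y|move=> _ x y]; by rewrite inE.
have [[eG rok pf2 sm lg] _ cov2] := phase2 dsym dtri lam0 Hdis R2 hinv0 Hs2.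
have inS1 : forall x, x \in S1 -> x \in s1.
  move=> x xS1; have := Hall x; rewrite Hs mem_cat => /orP[] // xs2.
  by have := allP Hs2 x xs2; rewrite (disjointFr Hdis xS1).
have inS2 : forall x, x \in S2 -> x \in s2.
  move=> x xS2; have := Hall x; rewrite Hs mem_cat => /orP[] // xs1.
  by have := allP Hs1 x xs1; rewrite (disjointFl Hdis xS2).
have inU : forall x, x \in S1 \/ x \in S2.
  move=> x; have : x \in S1 :|: S2 by rewrite HU inE.
  by rewrite in_setU => /orP[]; [left|right].
have Ck : (#|C| <= k1 + k2)%N.
  have sub : C \subset (C :&: S1) :|: (C :&: S2).
    apply/subsetP => x xC; rewrite !inE xC /=; case: (inU x) => -> //; by rewrite orbT.
  have := subset_leq_card sub; have := (leq_card_setU (C :&: S1) (C :&: S2)).1; lia.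
rewrite eG.
have mx : forall x y, x \in G2 fin -> y \in G -> 2 * rstar < d x y.
  move=> x y xG yG; case: (leqP #|G| k1) => h; last exact: lg.
  exact: arA r0 (sm h x y xG yG).
have part1 : (#|G| + #|G2 fin| <= k1 + k2)%N.
  have disj : G :&: G2 fin = set0.
    apply/setP => x; rewrite !inE; apply/negbTE/negP => /andP[xG xG2].
    by have := mx x x xG2 xG; rewrite d0 ltNge lam0.
  have pU : pfar d (2 * rstar) (G :|: G2 fin).
    move=> x y; rewrite !in_setU => /orP[xG|xG2] /orP[yG|yG2] ne.
    - exact: pG.
    - by rewrite dsym; exact: mx.
    - exact: mx.
    - exact: pf2.
  have := count_far (B := C) dsym dtri Ccov pU (fun x _ c cC _ => cC).
  rewrite cardsU disj cards0 subn0; lia.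
split => //.
- case: (leqP #|G| k1) => h; last by lia.
  have : (#|G2 fin| <= #|C :&: S2|)%N.
    apply: (count_far dsym dtri Ccov pf2) => x xG2 c cC dc.
    rewrite inE cC /=; case: (inU c) => // cS1.
    have [j jG dj] := cov1 c (inS1 c cS1).
    exfalso; exact: arB dc dj (dtri x c j) (sm h x j xG2 jG).
  lia.
- exists [set j in G | has_repl fin j], (fun c => (nth (c,c) (repl fin) (index c (map fst (repl fin)))).2).
  split.
  + by apply/subsetP => j; rewrite inE => /andP[].
  + move=> c; rewrite inE => /andP[cG hr]; have P := sigmaP hr; split => //.
    have [_ dd _] := rok _ P; rewrite dsym; exact: arC dd.
  + apply: (@leq_trans #|G :\: [set j in G | has_repl fin j]|).
      apply: subset_leq_card; apply/subsetP => x.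
      rewrite in_setI in_setU => /andP[/orP[]// /imsetP[c cG ->] xS1].
      rewrite inE in cG; case/andP: cG => _ hr; have [_ _ S] := rok _ (sigmaP hr).
      by rewrite (disjointFr Hdis xS1) in S.
    case: (leqP #|G| k1) => h.
      apply: leq_trans h; apply: subset_leq_card; exact: subsetDl.
    apply: leq_trans CS1.
    apply: (count_far dsym dtri Ccov (pfar_sub (subsetDl _ _) pG)) => x xA c cC dc.
    rewrite inE cC /=; case: (inU c) => // cS2.
    move: xA; rewrite !inE => /andP[nh xG].
    rewrite dsym in dc.
    have := cov2 h pG c (inS2 c cS2) x xG (arD dc) => hr.
    by rewrite xG hr in nh.
Qed.
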